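(* Let $\psi':V'\otimes V\to V\otimes V^*$ and $\psi:V^*\otimes V\to V\otimes V^*$ be the $R$-linear maps defined by \[ \psi'(v_i'\otimes v_k)=\begin{cases}q^{n+1-2i}\,v_k\otimes v_i^* & k\ne i,\\ q^{n+1-2i}\Bigl(q^{-1}v_i\otimes v_i^*+(q^{-1}-q)\sum_{l=1}^{i-1}v_l\otimes v_l^*\Bigr) & k=i,\end{cases} \] \[ \psi(v_i^*\otimes v_k)=\begin{cases}v_k\otimes v_i^* & k\ne i,\\ q^{-1}v_i\otimes v_i^*+(q^{-1}-q)\sum_{l=1}^{i-1}v_l\otimes v_l^* & k=i.\end{cases} \] Then $\psi'$ and $\psi$ are isomorphisms of $\mathbf U$-modules (in particular bijective for every $R$ and every invertible $q$).
   Context: $R$ is a commutative ring with $1$, $q\in R$ invertible, $n\ge1$. $\mathbf U$ denotes $\mathbf U_R=R\otimes_{\mathbb{Z}[q,q^{-1}]}\mathbf U$, where $\mathbf U$ is the $\mathbb{Z}[q,q^{-1}]$-subalgebra of $U_q(\mathfrak{gl}_n)$ (generators $e_i,f_i$ ($1\le i<n$), $q^h$ ($h\in\bigoplus_j\mathbb{Z}h_j$), standard relations, $K_i=q^{h_i-h_{i+1}}$) generated by the $q^h$ and divided powers $e_i^{(l)}=e_i^l/[l]_q!$, $f_i^{(l)}=f_i^l/[l]_q!$, $[l]_q=\sum_{j=0}^{l-1}q^{2j-l+1}$; Hopf structure $\Delta(q^h)=q^h\otimes q^h$, $\Delta(e_i)=e_i\otimes K_i^{-1}+1\otimes e_i$,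 $\Delta(f_i)=f_i\otimes1+K_i\otimes f_i$, $S(q^h)=q^{-h}$, $S(e_i)=-e_iK_i$, $S(f_i)=-K_i^{-1}f_i$. $V=R^n$ with basis $v_1,\dots,v_n$ is the vector representation: $q^hv_j=q^{\varepsilon_j(h)}v_j$ ($\varepsilon_j(h_k)=\delta_{jk}$), $e_iv_{i+1}=v_i$, $f_iv_i=v_{i+1}$, other $e_iv_j,f_iv_j$ zero. $V^*=\mathrm{Hom}_R(V,R)$ with dual basis $v_i^*$ and action $(xg)(v)=g(S(x)v)$; $V'$ is the same $R$-module with action $(xg)(v)=g(S^{-1}(x)v)$, its basis elements written $v_i'$. Tensor products are modules via $\Delta$. *)

(* Defs.v *)
From HB Require Import structures.
From mathcomp Require Import all_boot all_order all_algebra.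
Set Implicit Arguments.
Unset Strict Implicit.
Unset Printing Implicit Defensive.
Import Order.TTheory GRing.Theory Num.Theory.
Local Open Scope ring_scope.

(* Conventions:
   - basis index v_1..v_n  <->  'I_n with values 0..n-1;
   - generator e_i, f_i (paper 1 <= i < n)  <->  i : nat with i.+1 < n,
     e_i v_{i+1} = v_i becomes: e_i maps basis index i.+1 to index i;
   - h = sum_j c_j h_j is represented by c : 'I_n -> int;
   - an R-linear map between free modules with finite bases indexed by I, J
     is its matrix A : J -> I -> R (A j i = coefficient of basis j in A(basis i));
   - a U-module structure on a free module with basis I is the data of the
     action matrices of the algebra generators q^h, e_i^(l), f_i^(l) of U. *)

Section QGroup.
Variables (R : comPzRingType) (n : nat) (q qinv : R).

(* q^z for z : int, with qinv the inverse of q *)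
Definition qpow (z : int) : R :=
  match z with Posz m => q ^+ m | Negz m => qinv ^+ m.+1 end.

Definition lmap (I J : finType) := J -> I -> R.

Definition lcomp (I J K : finType) (A : lmap J K) (B : lmap I J) : lmap I K :=
  fun k i => \sum_(j : J) A k j * B j i.

Definition lid (I : finType) : lmap I I := fun j i => (j == i)%:R.

Definition lscale (I : finType) (c : R) (A : lmap I I) : lmap I I :=
  fun j i => c * A j i.

Definition ltr (I : finType) (A : lmap I I) : lmap I I := fun j i => A i j.

Definition ltens (I J : finType) (A : lmap I I) (B : lmap J J)
  : lmap (I * J)%type (I * J)%type :=
  fun ab cd => A ab.1 cd.1 * B ab.2 cd.2.

Definition lapply (I J : finType) (A : lmap I J) (v : {ffun I -> R}) : {ffun J -> R} :=
  [ffun j => \sum_(i : I) A j i * v i].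

Record Umod (I : finType) := MkUmod {
  actH : ('I_n -> int) -> lmap I I;     (* action of q^h *)
  actE : nat -> nat -> lmap I I;        (* actE i l = action of e_i^(l) *)
  actF : nat -> nat -> lmap I I         (* actF i l = action of f_i^(l) *)
}.

(* the weight a * (h_i - h_{i+1}), so that q^(Kw i a) = K_i^a *)
Definition Kw (i : nat) (a : int) : 'I_n -> int :=
  fun j => a * (((nat_of_ord j == i) : int) - ((nat_of_ord j == i.+1) : int)).

Definition Vmod : Umod 'I_n := MkUmod
  (fun h j k => if j == k then qpow (h j) else 0)
  (fun i l j k => if l == 0%N then (j == k)%:R
                  else if l == 1%N then ((nat_of_ord j == i) && (nat_of_ord k == i.+1))%:R
                  else 0)
  (fun i l j k => if l == 0%N then (j == k)%:R
                  else if l == 1%N then ((nat_of_ord j == i.+1) && (nat_of_ord k == i))%:R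
                  else 0).

Definition sgnq (l : nat) (z : int) : R := (-1) ^+ l * qpow z.

(* dual module via S:  S(q^h) = q^-h,
   S(e_i^(l)) = (-1)^l q^(l(l-1)) e_i^(l) K_i^l,
   S(f_i^(l)) = (-1)^l q^(-l(l-1)) K_i^-l f_i^(l);
   (x g)(v) = g(S(x) v) gives the transposed matrix in the dual basis *)
Definition dualS (I : finType) (M : Umod I) : Umod I := MkUmod
  (fun h => ltr (actH M (fun j => - h j)))
  (fun i l => ltr (lscale (sgnq l (l * l.-1)%:Z)
                          (lcomp (actE M i l) (actH M (Kw i l%:Z)))))
  (fun i l => ltr (lscale (sgnq l (- (l * l.-1)%:Z))
                          (lcomp (actH M (Kw i (- l%:Z))) (actF M i l)))).

(* twisted dual module via S^-1:  S^-1(q^h) = q^-h,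
   S^-1(e_i^(l)) = (-1)^l q^(-l(l-1)) K_i^l e_i^(l),
   S^-1(f_i^(l)) = (-1)^l q^(l(l-1)) f_i^(l) K_i^-l *)
Definition dualSinv (I : finType) (M : Umod I) : Umod I := MkUmod
  (fun h => ltr (actH M (fun j => - h j)))
  (fun i l => ltr (lscale (sgnq l (- (l * l.-1)%:Z))
                          (lcomp (actH M (Kw i l%:Z)) (actE M i l))))
  (fun i l => ltr (lscale (sgnq l (l * l.-1)%:Z)
                          (lcomp (actF M i l) (actH M (Kw i (- l%:Z)))))).

(* tensor product via the coproduct of the generators:
   Delta(q^h) = q^h (x) q^h,
   Delta(e_i^(l)) = sum_{a+b=l} q^(ab) e_i^(a) (x) K_i^-a e_i^(b),
   Delta(f_i^(l)) = sum_{a+b=l} q^(ab) K_i^b f_i^(a) (x) f_i^(b)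
   (these follow from Delta(e_i) = e_i (x) K_i^-1 + 1 (x) e_i and
    Delta(f_i) = f_i (x) 1 + K_i (x) f_i by the q-binomial formula) *)
Definition tensmod (I J : finType) (M : Umod I) (N : Umod J) : Umod (I * J)%type :=
  MkUmod
  (fun h => ltens (actH M h) (actH N h))
  (fun i l ab cd => \sum_(a < l.+1)
      qpow (a * (l - a))%:Z *
      ltens (actE M i a) (lcomp (actH N (Kw i (- a%:Z))) (actE N i (l - a))) ab cd)
  (fun i l ab cd => \sum_(a < l.+1)
      qpow (a * (l - a))%:Z *
      ltens (lcomp (actH M (Kw i (l - a)%:Z)) (actF M i a)) (actF N i (l - a)) ab cd).

Definition is_Uhom (I J : finType) (M : Umod I) (N : Umod J) (P : lmap I J) : Prop :=
  [/\ forall h : 'I_n -> int, lcomp P (actH M h) = lcomp (actH N h) P,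
      forall i l : nat, (i.+1 < n)%N -> lcomp P (actE M i l) = lcomp (actE N i l) P
    & forall i l : nat, (i.+1 < n)%N -> lcomp P (actF M i l) = lcomp (actF N i l) P].

Definition is_Uiso (I J : finType) (M : Umod I) (N : Umod J) (P : lmap I J) : Prop :=
  is_Uhom M N P /\ bijective (lapply P).

Definition V' := dualSinv Vmod.
Definition Vstar := dualS Vmod.

(* psi : V^* (x) V -> V (x) V^*;  source index (i,k) = v_i^* (x) v_k,
   target index (a,b) = v_a (x) v_b^* *)
Definition psi : lmap ('I_n * 'I_n)%type ('I_n * 'I_n)%type :=
  fun ab ik =>
    let: (a, b) := ab in let: (i, k) := ik in
    if k != i then ((a == k) && (b == i))%:R
    else if (a == i) && (b == i) then qinv
    else if (a == b) && (a < i)%N then qinv - q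
    else 0.

(* psi' : V' (x) V -> V (x) V^*; paper index i (1-based) = i0.+1, so
   q^(n+1-2i) = q^(n-1-2 i0) *)
Definition psi' : lmap ('I_n * 'I_n)%type ('I_n * 'I_n)%type :=
  fun ab ik => qpow (n%:Z - 1 - 2 * (nat_of_ord ik.1)%:Z) * psi ab ik.

End QGroup.

(* Main.v *)
Require Import Defs.
From mathcomp Require Import all_boot all_order all_algebra.
From mathcomp Require Import ring zify.
From Stdlib Require Import FunctionalExtensionality IndefiniteDescription.
Set Implicit Arguments. Unset Strict Implicit. Unset Printing Implicit Defensive.
Import GRing.Theory.
Local Open Scope ring_scope.

Lemma qpow0 (R : comPzRingType) (q qinv : R) : qpow q qinv 0 = 1.
Proof. by []. Qed.
Lemma qpow1 (R : comPzRingType) (q qinv : R) : qpow q qinv 1 = q.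
Proof. exact: expr1. Qed.
Lemma qpowN1 (R : comPzRingType) (q qinv : R) : qpow q qinv (-1) = qinv.
Proof. exact: expr1. Qed.

Lemma KwE n (i : nat) (a : int) (j : 'I_n) :
  Kw i a j = if nat_of_ord j == i then a else if nat_of_ord j == i.+1 then - a else 0.
Proof.
rewrite /Kw; case: eqP => [->|_]; first by rewrite (_ : (i == i.+1) = false) ?eqxx ?subr0 ?mulr1 // ; lia.
by case: eqP => _ /=; rewrite ?subrr ?sub0r ?mulrN1 ?mulr0.
Qed.

Lemma ordE n (x y : 'I_n) : (x == y) = (nat_of_ord x == nat_of_ord y).
Proof. by []. Qed.

Lemma sum_diag (R : comPzRingType) (I : finType) (F : I -> R) (j : I) :
  \sum_(m : I) (m == j)%:R * F m = F j.
Proof.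
rewrite (bigD1 j) //= eqxx mul1r big1 ?addr0 // => m /negbTE ->; by rewrite mul0r.
Qed.

Lemma sum_diag' (R : comPzRingType) (I : finType) (F : I -> R) (j : I) :
  \sum_(m : I) (j == m)%:R * F m = F j.
Proof. rewrite -[RHS](sum_diag F j); apply: eq_bigr => m _; by rewrite eq_sym. Qed.


Lemma VH (R : comPzRingType) n (q qinv : R) h (j k : 'I_n) :
  actH (Vmod n q qinv) h j k = (j == k)%:R * qpow q qinv (h j).
Proof. by rewrite /=; case: eqP => [->|]; rewrite ?mul1r ?mul0r. Qed.

Lemma VsH (R : comPzRingType) n (q qinv : R) h (j k : 'I_n) :
  actH (Vstar n q qinv) h j k = (j == k)%:R * qpow q qinv (- h j).
Proof. by rewrite /= /ltr /=; case: eqP => [->|/nesym/eqP/negbTE ->]; rewrite ?eqxx ?mul1r ?mul0r. Qed.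

Lemma VpH (R : comPzRingType) n (q qinv : R) h (j k : 'I_n) :
  actH (V' n q qinv) h j k = (j == k)%:R * qpow q qinv (- h j).
Proof. by rewrite /= /ltr /=; case: eqP => [->|/nesym/eqP/negbTE ->]; rewrite ?eqxx ?mul1r ?mul0r. Qed.

Lemma lcompHl (R : comPzRingType) n (I : finType) (M : Umod R n 'I_n) (d : 'I_n -> R) (A : lmap R I 'I_n) h j k :
  (forall j k, actH M h j k = (j == k)%:R * d j) ->
  lcomp (actH M h) A j k = d j * A j k.
Proof.
move=> hM; rewrite /lcomp -[RHS](sum_diag' (fun m => d m * A m k) j).
by apply: eq_bigr => m _; rewrite hM; case: eqP => [->|]; rewrite ?mul1r ?mul0r.
Qed.

Lemma lcompHr (R : comPzRingType) n (I : finType) (M : Umod R n 'I_n) (d : 'I_n -> R) (A : lmap R 'I_n I) h j k :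
  (forall j k, actH M h j k = (j == k)%:R * d j) ->
  lcomp A (actH M h) j k = A j k * d k.
Proof.
move=> hM; rewrite /lcomp -[RHS](sum_diag (fun m => A j m * d m) k).
by apply: eq_bigr => m _; rewrite hM; case: eqP => [->|]; rewrite ?mul1r ?mul0r ?mulr0.
Qed.

Lemma bump0S k : bump 0 k = k.+1.
Proof. by []. Qed.

Lemma tensE1 (R : comPzRingType) n (q qinv : R) (M N : Umod R n 'I_n) dN i ab cd :
  (forall h j k, actH N h j k = (j == k)%:R * dN h j) ->
  (forall j k, actE M i 0 j k = (j == k)%:R) -> (forall j k, actE N i 0 j k = (j==k)%:R) ->
  actE (tensmod q qinv M N) i 1 ab cd =
    (ab.1 == cd.1)%:R * (dN (Kw i 0) ab.2 * actE N i 1 ab.2 cd.2)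
    + actE M i 1 ab.1 cd.1 * (dN (Kw i (-1)) ab.2 * (ab.2 == cd.2)%:R).
Proof.
move=> hN hM0 hN0.
rewrite /= !big_ord_recl big_ord0 /ltens /bump /= ?subn0 ?subnn ?mul0n ?muln0 ?muln1 ?expr0 ?mul1r ?addr0.
rewrite !(@lcompHl _ _ _ _ _ _ _ _ _ (hN _)) hM0 hN0 oppr0; ring.
Qed.

Lemma tensE2 (R : comPzRingType) n (q qinv : R) (M N : Umod R n 'I_n) dN i ab cd :
  (forall h j k, actH N h j k = (j == k)%:R * dN h j) ->
  (forall j k, actE M i 2 j k = 0) -> (forall j k, actE N i 2 j k = 0) ->
  actE (tensmod q qinv M N) i 2 ab cd =
    q * (actE M i 1 ab.1 cd.1 * (dN (Kw i (-1)) ab.2 * actE N i 1 ab.2 cd.2)).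
Proof.
move=> hN hM2 hN2.
rewrite /= !big_ord_recl big_ord0 /ltens /bump /= .
rewrite !(@lcompHl _ _ _ _ _ _ _ _ _ (hN _)) hM2 hN2 !bump0S.
rewrite ?subn0 ?subn1 ?subnn ?mul0n ?muln0 ?mul1n ?muln1 ?expr0 ?expr1 /=.
ring.
Qed.

Ltac nums := rewrite ?bump0S ?subn0 ?subn1 ?subnn ?mul0n ?muln0 ?mul1n ?muln1 ?expr0 ?expr1 /=.


Lemma pair_delta (R : comPzRingType) (I J : eqType) (ab cd : I * J) :
  (ab == cd)%:R = (ab.1 == cd.1)%:R * (ab.2 == cd.2)%:R :> R.
Proof. by case: ab cd => a b [c d]; rewrite xpair_eqE /=; case: eqP; case: eqP; rewrite ?mul1r ?mul0r. Qed.

Lemma tensE0 (R : comPzRingType) n (q qinv : R) (M N : Umod R n 'I_n) dN i ab cd :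
  (forall h j k, actH N h j k = (j == k)%:R * dN h j) ->
  (forall j, dN (Kw i 0) j = 1) ->
  (forall j k, actE M i 0 j k = (j == k)%:R) -> (forall j k, actE N i 0 j k = (j==k)%:R) ->
  actE (tensmod q qinv M N) i 0 ab cd = (ab == cd)%:R.
Proof.
move=> hN hK hM0 hN0.
rewrite /= !big_ord_recl big_ord0 /ltens /=.
rewrite !(@lcompHl _ _ _ _ _ _ _ _ _ (hN _)); nums.
by rewrite hM0 hN0 oppr0 hK pair_delta; ring.
Qed.

Lemma tensEge3 (R : comPzRingType) n (q qinv : R) (M N : Umod R n 'I_n) dN i l ab cd :
  (forall h j k, actH N h j k = (j == k)%:R * dN h j) ->
  (forall l j k, (1 < l)%N -> actE M i l j k = 0) -> (forall l j k, (1 < l)%N -> actE N i l j k = 0) ->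
  (2 < l)%N ->
  actE (tensmod q qinv M N) i l ab cd = 0.
Proof.
move=> hN hM hN2 hl.
rewrite /= big1 // => a _; rewrite /ltens.
case: (leqP 2 a) => ha; first by rewrite hM // mul0r mulr0.
rewrite (@lcompHl _ _ _ _ _ _ _ _ _ (hN _)) hN2 ?mulr0 //.
have := ltn_ord a; lia.
Qed.

Lemma tensF0 (R : comPzRingType) n (q qinv : R) (M N : Umod R n 'I_n) dM i ab cd :
  (forall h j k, actH M h j k = (j == k)%:R * dM h j) ->
  (forall j, dM (Kw i 0) j = 1) ->
  (forall j k, actF M i 0 j k = (j == k)%:R) -> (forall j k, actF N i 0 j k = (j==k)%:R) ->
  actF (tensmod q qinv M N) i 0 ab cd = (ab == cd)%:R.
Proof.
move=> hM hK hM0 hN0.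
rewrite /= !big_ord_recl big_ord0 /ltens /=.
rewrite !(@lcompHl _ _ _ _ _ _ _ _ _ (hM _)); nums.
by rewrite hM0 hN0 hK pair_delta; ring.
Qed.

Lemma tensF1 (R : comPzRingType) n (q qinv : R) (M N : Umod R n 'I_n) dM i ab cd :
  (forall h j k, actH M h j k = (j == k)%:R * dM h j) ->
  (forall j k, actF M i 0 j k = (j == k)%:R) -> (forall j k, actF N i 0 j k = (j==k)%:R) ->
  actF (tensmod q qinv M N) i 1 ab cd =
    dM (Kw i 1) ab.1 * (ab.1 == cd.1)%:R * actF N i 1 ab.2 cd.2
    + dM (Kw i 0) ab.1 * actF M i 1 ab.1 cd.1 * (ab.2 == cd.2)%:R.
Proof.
move=> hM hM0 hN0.
rewrite /= !big_ord_recl big_ord0 /ltens /=.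
rewrite !(@lcompHl _ _ _ _ _ _ _ _ _ (hM _)); nums.
by rewrite hM0 hN0; ring.
Qed.

Lemma tensF2 (R : comPzRingType) n (q qinv : R) (M N : Umod R n 'I_n) dM i ab cd :
  (forall h j k, actH M h j k = (j == k)%:R * dM h j) ->
  (forall j k, actF M i 2 j k = 0) -> (forall j k, actF N i 2 j k = 0) ->
  actF (tensmod q qinv M N) i 2 ab cd =
    q * (dM (Kw i 1) ab.1 * actF M i 1 ab.1 cd.1 * actF N i 1 ab.2 cd.2).
Proof.
move=> hM hM2 hN2.
rewrite /= !big_ord_recl big_ord0 /ltens /=.
rewrite !(@lcompHl _ _ _ _ _ _ _ _ _ (hM _)); nums.
rewrite hM2 hN2; ring.
Qed.

Lemma tensFge3 (R : comPzRingType) n (q qinv : R) (M N : Umod R n 'I_n) dM i l ab cd :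
  (forall h j k, actH M h j k = (j == k)%:R * dM h j) ->
  (forall l j k, (1 < l)%N -> actF M i l j k = 0) -> (forall l j k, (1 < l)%N -> actF N i l j k = 0) ->
  (2 < l)%N ->
  actF (tensmod q qinv M N) i l ab cd = 0.
Proof.
move=> hM hM2 hN2 hl.
rewrite /= big1 // => a _; rewrite /ltens.
case: (leqP 2 a) => ha.
  by rewrite (@lcompHl _ _ _ _ _ _ _ _ _ (hM _)) hM2 // mulr0 mul0r mulr0.
rewrite hN2 ?mulr0 //.
have := ltn_ord a; lia.
Qed.

Ltac split_atom b :=
  lazymatch b with
  | true => fail
  | false => fail
  | ?x && ?y => first [split_atom x | split_atom y]
  | ?x || ?y => first [split_atom x | split_atom y]
  | ~~ ?x => split_atom x
  | _ => let H := fresh "H" in case: (boolP b) => H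
  end.

Ltac crush_step :=
  match goal with
  | |- context [nat_of_bool ?b] => split_atom b
  | |- context [if ?b then _ else _] => split_atom b
  end.

Ltac simpl_goal := rewrite /= ?expr1 ?mulr1n ?mulr0n ?oppr0 ?opprK ?qpow0 ?qpow1 ?qpowN1
   ?mul0r ?mulr0 ?add0r ?addr0 ?mul1r ?mulr1.

Ltac crush Hq :=
  repeat (crush_step; simpl_goal; try (exfalso; lia); try done);
  try (by ring: Hq).

Lemma K0 n (i : nat) (j : 'I_n) : Kw i 0 j = 0.
Proof. by rewrite /Kw mul0r. Qed.

Lemma VE0 (R : comPzRingType) n (q qinv : R) i (j k : 'I_n) :
  actE (Vmod n q qinv) i 0 j k = (j == k)%:R.
Proof. by []. Qed.
Lemma VF0 (R : comPzRingType) n (q qinv : R) i (j k : 'I_n) :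
  actF (Vmod n q qinv) i 0 j k = (j == k)%:R.
Proof. by []. Qed.
Lemma VE2 (R : comPzRingType) n (q qinv : R) i l (j k : 'I_n) :
  (1 < l)%N -> actE (Vmod n q qinv) i l j k = 0.
Proof. by case: l => [|[|l]]. Qed.
Lemma VF2 (R : comPzRingType) n (q qinv : R) i l (j k : 'I_n) :
  (1 < l)%N -> actF (Vmod n q qinv) i l j k = 0.
Proof. by case: l => [|[|l]]. Qed.
Lemma VE1 (R : comPzRingType) n (q qinv : R) i (j k : 'I_n) :
  actE (Vmod n q qinv) i 1 j k = ((nat_of_ord j == i) && (nat_of_ord k == i.+1))%:R.
Proof. by []. Qed.
Lemma VF1 (R : comPzRingType) n (q qinv : R) i (j k : 'I_n) :
  actF (Vmod n q qinv) i 1 j k = ((nat_of_ord j == i.+1) && (nat_of_ord k == i))%:R.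
Proof. by []. Qed.

Lemma VsE (R : comPzRingType) n (q qinv : R) i l (j k : 'I_n) :
  actE (Vstar n q qinv) i l j k =
  sgnq q qinv l (l * l.-1)%:Z * (actE (Vmod n q qinv) i l k j * qpow q qinv (Kw i l%:Z j)).
Proof. by rewrite /= /ltr /lscale (@lcompHr _ _ _ _ _ _ _ _ _ (VH _ _ _)). Qed.
Lemma VsF (R : comPzRingType) n (q qinv : R) i l (j k : 'I_n) :
  actF (Vstar n q qinv) i l j k =
  sgnq q qinv l (- (l * l.-1)%:Z) * (qpow q qinv (Kw i (- l%:Z) k) * actF (Vmod n q qinv) i l k j).
Proof. by rewrite /= /ltr /lscale (@lcompHl _ _ _ _ _ _ _ _ _ (VH _ _ _)). Qed.
Lemma VpE (R : comPzRingType) n (q qinv : R) i l (j k : 'I_n) :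
  actE (V' n q qinv) i l j k =
  sgnq q qinv l (- (l * l.-1)%:Z) * (qpow q qinv (Kw i l%:Z k) * actE (Vmod n q qinv) i l k j).
Proof. by rewrite /= /ltr /lscale (@lcompHl _ _ _ _ _ _ _ _ _ (VH _ _ _)). Qed.
Lemma VpF (R : comPzRingType) n (q qinv : R) i l (j k : 'I_n) :
  actF (V' n q qinv) i l j k =
  sgnq q qinv l (l * l.-1)%:Z * (actF (Vmod n q qinv) i l k j * qpow q qinv (Kw i (- l%:Z) j)).
Proof. by rewrite /= /ltr /lscale (@lcompHr _ _ _ _ _ _ _ _ _ (VH _ _ _)). Qed.

Lemma VsE0 (R : comPzRingType) n (q qinv : R) i (j k : 'I_n) :
  actE (Vstar n q qinv) i 0 j k = (j == k)%:R.
Proof. by rewrite VsE VE0 K0 /sgnq expr0 qpow0 !mul1r mulr1 eq_sym. Qed.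
Lemma VsF0 (R : comPzRingType) n (q qinv : R) i (j k : 'I_n) :
  actF (Vstar n q qinv) i 0 j k = (j == k)%:R.
Proof. by rewrite VsF VF0 oppr0 K0 /sgnq expr0 qpow0 !mul1r eq_sym. Qed.
Lemma VpE0 (R : comPzRingType) n (q qinv : R) i (j k : 'I_n) :
  actE (V' n q qinv) i 0 j k = (j == k)%:R.
Proof. by rewrite VpE VE0 K0 /sgnq expr0 oppr0 qpow0 !mul1r eq_sym. Qed.
Lemma VpF0 (R : comPzRingType) n (q qinv : R) i (j k : 'I_n) :
  actF (V' n q qinv) i 0 j k = (j == k)%:R.
Proof. by rewrite VpF VF0 oppr0 K0 /sgnq expr0 qpow0 !mul1r mulr1 eq_sym. Qed.

Lemma VsE2 (R : comPzRingType) n (q qinv : R) i l (j k : 'I_n) :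
  (1 < l)%N -> actE (Vstar n q qinv) i l j k = 0.
Proof. by move=> hl; rewrite VsE VE2 // mul0r mulr0. Qed.
Lemma VsF2 (R : comPzRingType) n (q qinv : R) i l (j k : 'I_n) :
  (1 < l)%N -> actF (Vstar n q qinv) i l j k = 0.
Proof. by move=> hl; rewrite VsF VF2 // mulr0 mulr0. Qed.
Lemma VpE2 (R : comPzRingType) n (q qinv : R) i l (j k : 'I_n) :
  (1 < l)%N -> actE (V' n q qinv) i l j k = 0.
Proof. by move=> hl; rewrite VpE VE2 // mulr0 mulr0. Qed.
Lemma VpF2 (R : comPzRingType) n (q qinv : R) i l (j k : 'I_n) :
  (1 < l)%N -> actF (V' n q qinv) i l j k = 0.
Proof. by move=> hl; rewrite VpF VF2 // mul0r mulr0. Qed.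

Lemma VsE1 (R : comPzRingType) n (q qinv : R) i (j k : 'I_n) :
  actE (Vstar n q qinv) i 1 j k = - qinv * ((nat_of_ord j == i.+1) && (nat_of_ord k == i))%:R.
Proof. rewrite VsE VE1 KwE /sgnq; nums. crush (erefl q). Qed.
Lemma VsF1 (R : comPzRingType) n (q qinv : R) i (j k : 'I_n) :
  actF (Vstar n q qinv) i 1 j k = - q * ((nat_of_ord j == i) && (nat_of_ord k == i.+1))%:R.
Proof. rewrite VsF VF1 KwE /sgnq; nums. crush (erefl q). Qed.
Lemma VpE1 (R : comPzRingType) n (q qinv : R) i (j k : 'I_n) :
  actE (V' n q qinv) i 1 j k = - q * ((nat_of_ord j == i.+1) && (nat_of_ord k == i))%:R.
Proof. rewrite VpE VE1 KwE /sgnq; nums. crush (erefl q). Qed.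
Lemma VpF1 (R : comPzRingType) n (q qinv : R) i (j k : 'I_n) :
  actF (V' n q qinv) i 1 j k = - qinv * ((nat_of_ord j == i) && (nat_of_ord k == i.+1))%:R.
Proof. rewrite VpF VF1 KwE /sgnq; nums. crush (erefl q). Qed.



Lemma sum2 (R : comPzRingType) (I : finType) (F : I -> R) (u1 u2 : I) :
  (forall j, j != u1 -> j != u2 -> F j = 0) ->
  \sum_j F j = F u1 + (if u2 == u1 then 0 else F u2).
Proof.
move=> hF; rewrite (bigD1 u1) //=; congr (_ + _).
case: eqP => [e|/eqP hne].
  rewrite big1 // => j hj; apply: hF => //; by rewrite e.
rewrite (bigD1 u2) /=; last exact: hne.
rewrite big1 ?addr0 // => j /andP [h1 h2]; exact: hF.
Qed.

Lemma T1E1 (R : comPzRingType) n (q qinv : R) i (ab cd : 'I_n * 'I_n) :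
  actE (tensmod q qinv (V' n q qinv) (Vmod n q qinv)) i 1 ab cd =
    (ab.1 == cd.1)%:R * ((fun h j => qpow q qinv (h j)) (Kw i 0) ab.2 * actE (Vmod n q qinv) i 1 ab.2 cd.2)
    + actE (V' n q qinv) i 1 ab.1 cd.1 * ((fun h j => qpow q qinv (h j)) (Kw i (-1)) ab.2 * (ab.2 == cd.2)%:R).
Proof. exact: (@tensE1 _ _ q qinv _ _ (fun h j => qpow q qinv (h j)) i ab cd (VH q qinv) (VpE0 q qinv i) (VE0 q qinv i)). Qed.
Lemma T1E2 (R : comPzRingType) n (q qinv : R) i (ab cd : 'I_n * 'I_n) :
  actE (tensmod q qinv (V' n q qinv) (Vmod n q qinv)) i 2 ab cd =
    q * (actE (V' n q qinv) i 1 ab.1 cd.1 * ((fun h j => qpow q qinv (h j)) (Kw i (-1)) ab.2 * actE (Vmod n q qinv) i 1 ab.2 cd.2)).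
Proof. exact: (@tensE2 _ _ q qinv _ _ (fun h j => qpow q qinv (h j)) i ab cd (VH q qinv) (fun j k => @VpE2 _ _ q qinv i 2 j k isT) (fun j k => @VE2 _ _ q qinv i 2 j k isT)). Qed.
Lemma T1F1 (R : comPzRingType) n (q qinv : R) i (ab cd : 'I_n * 'I_n) :
  actF (tensmod q qinv (V' n q qinv) (Vmod n q qinv)) i 1 ab cd =
    (fun h j => qpow q qinv (- h j)) (Kw i 1) ab.1 * (ab.1 == cd.1)%:R * actF (Vmod n q qinv) i 1 ab.2 cd.2
    + (fun h j => qpow q qinv (- h j)) (Kw i 0) ab.1 * actF (V' n q qinv) i 1 ab.1 cd.1 * (ab.2 == cd.2)%:R.
Proof. exact: (@tensF1 _ _ q qinv _ _ (fun h j => qpow q qinv (- h j)) i ab cd (VpH q qinv) (VpF0 q qinv i) (VF0 q qinv i)). Qed.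
Lemma T1F2 (R : comPzRingType) n (q qinv : R) i (ab cd : 'I_n * 'I_n) :
  actF (tensmod q qinv (V' n q qinv) (Vmod n q qinv)) i 2 ab cd =
    q * ((fun h j => qpow q qinv (- h j)) (Kw i 1) ab.1 * actF (V' n q qinv) i 1 ab.1 cd.1 * actF (Vmod n q qinv) i 1 ab.2 cd.2).
Proof. exact: (@tensF2 _ _ q qinv _ _ (fun h j => qpow q qinv (- h j)) i ab cd (VpH q qinv) (fun j k => @VpF2 _ _ q qinv i 2 j k isT) (fun j k => @VF2 _ _ q qinv i 2 j k isT)). Qed.
Lemma T1E0 (R : comPzRingType) n (q qinv : R) i (ab cd : 'I_n * 'I_n) : actE (tensmod q qinv (V' n q qinv) (Vmod n q qinv)) i 0 ab cd = (ab == cd)%:R.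
Proof. exact: (@tensE0 _ _ q qinv _ _ (fun h j => qpow q qinv (h j)) i ab cd (VH q qinv) (fun j => ltac:(by rewrite /= K0 ?oppr0)) (VpE0 q qinv i) (VE0 q qinv i)). Qed.
Lemma T1F0 (R : comPzRingType) n (q qinv : R) i (ab cd : 'I_n * 'I_n) : actF (tensmod q qinv (V' n q qinv) (Vmod n q qinv)) i 0 ab cd = (ab == cd)%:R.
Proof. exact: (@tensF0 _ _ q qinv _ _ (fun h j => qpow q qinv (- h j)) i ab cd (VpH q qinv) (fun j => ltac:(by rewrite /= K0 ?oppr0)) (VpF0 q qinv i) (VF0 q qinv i)). Qed.
Lemma T1Eg (R : comPzRingType) n (q qinv : R) i l (ab cd : 'I_n * 'I_n) : (2 < l)%N -> actE (tensmod q qinv (V' n q qinv) (Vmod n q qinv)) i l ab cd = 0.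
Proof. exact: (@tensEge3 _ _ q qinv _ _ (fun h j => qpow q qinv (h j)) i l ab cd (VH q qinv) (fun l j k => @VpE2 _ _ q qinv i l j k) (fun l j k => @VE2 _ _ q qinv i l j k)). Qed.
Lemma T1Fg (R : comPzRingType) n (q qinv : R) i l (ab cd : 'I_n * 'I_n) : (2 < l)%N -> actF (tensmod q qinv (V' n q qinv) (Vmod n q qinv)) i l ab cd = 0.
Proof. exact: (@tensFge3 _ _ q qinv _ _ (fun h j => qpow q qinv (- h j)) i l ab cd (VpH q qinv) (fun l j k => @VpF2 _ _ q qinv i l j k) (fun l j k => @VF2 _ _ q qinv i l j k)). Qed.

Lemma T2E1 (R : comPzRingType) n (q qinv : R) i (ab cd : 'I_n * 'I_n) :
  actE (tensmod q qinv (Vstar n q qinv) (Vmod n q qinv)) i 1 ab cd =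
    (ab.1 == cd.1)%:R * ((fun h j => qpow q qinv (h j)) (Kw i 0) ab.2 * actE (Vmod n q qinv) i 1 ab.2 cd.2)
    + actE (Vstar n q qinv) i 1 ab.1 cd.1 * ((fun h j => qpow q qinv (h j)) (Kw i (-1)) ab.2 * (ab.2 == cd.2)%:R).
Proof. exact: (@tensE1 _ _ q qinv _ _ (fun h j => qpow q qinv (h j)) i ab cd (VH q qinv) (VsE0 q qinv i) (VE0 q qinv i)). Qed.
Lemma T2E2 (R : comPzRingType) n (q qinv : R) i (ab cd : 'I_n * 'I_n) :
  actE (tensmod q qinv (Vstar n q qinv) (Vmod n q qinv)) i 2 ab cd =
    q * (actE (Vstar n q qinv) i 1 ab.1 cd.1 * ((fun h j => qpow q qinv (h j)) (Kw i (-1)) ab.2 * actE (Vmod n q qinv) i 1 ab.2 cd.2)).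
Proof. exact: (@tensE2 _ _ q qinv _ _ (fun h j => qpow q qinv (h j)) i ab cd (VH q qinv) (fun j k => @VsE2 _ _ q qinv i 2 j k isT) (fun j k => @VE2 _ _ q qinv i 2 j k isT)). Qed.
Lemma T2F1 (R : comPzRingType) n (q qinv : R) i (ab cd : 'I_n * 'I_n) :
  actF (tensmod q qinv (Vstar n q qinv) (Vmod n q qinv)) i 1 ab cd =
    (fun h j => qpow q qinv (- h j)) (Kw i 1) ab.1 * (ab.1 == cd.1)%:R * actF (Vmod n q qinv) i 1 ab.2 cd.2
    + (fun h j => qpow q qinv (- h j)) (Kw i 0) ab.1 * actF (Vstar n q qinv) i 1 ab.1 cd.1 * (ab.2 == cd.2)%:R.
Proof. exact: (@tensF1 _ _ q qinv _ _ (fun h j => qpow q qinv (- h j)) i ab cd (VsH q qinv) (VsF0 q qinv i) (VF0 q qinv i)). Qed.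
Lemma T2F2 (R : comPzRingType) n (q qinv : R) i (ab cd : 'I_n * 'I_n) :
  actF (tensmod q qinv (Vstar n q qinv) (Vmod n q qinv)) i 2 ab cd =
    q * ((fun h j => qpow q qinv (- h j)) (Kw i 1) ab.1 * actF (Vstar n q qinv) i 1 ab.1 cd.1 * actF (Vmod n q qinv) i 1 ab.2 cd.2).
Proof. exact: (@tensF2 _ _ q qinv _ _ (fun h j => qpow q qinv (- h j)) i ab cd (VsH q qinv) (fun j k => @VsF2 _ _ q qinv i 2 j k isT) (fun j k => @VF2 _ _ q qinv i 2 j k isT)). Qed.
Lemma T2E0 (R : comPzRingType) n (q qinv : R) i (ab cd : 'I_n * 'I_n) : actE (tensmod q qinv (Vstar n q qinv) (Vmod n q qinv)) i 0 ab cd = (ab == cd)%:R.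
Proof. exact: (@tensE0 _ _ q qinv _ _ (fun h j => qpow q qinv (h j)) i ab cd (VH q qinv) (fun j => ltac:(by rewrite /= K0 ?oppr0)) (VsE0 q qinv i) (VE0 q qinv i)). Qed.
Lemma T2F0 (R : comPzRingType) n (q qinv : R) i (ab cd : 'I_n * 'I_n) : actF (tensmod q qinv (Vstar n q qinv) (Vmod n q qinv)) i 0 ab cd = (ab == cd)%:R.
Proof. exact: (@tensF0 _ _ q qinv _ _ (fun h j => qpow q qinv (- h j)) i ab cd (VsH q qinv) (fun j => ltac:(by rewrite /= K0 ?oppr0)) (VsF0 q qinv i) (VF0 q qinv i)). Qed.
Lemma T2Eg (R : comPzRingType) n (q qinv : R) i l (ab cd : 'I_n * 'I_n) : (2 < l)%N -> actE (tensmod q qinv (Vstar n q qinv) (Vmod n q qinv)) i l ab cd = 0.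
Proof. exact: (@tensEge3 _ _ q qinv _ _ (fun h j => qpow q qinv (h j)) i l ab cd (VH q qinv) (fun l j k => @VsE2 _ _ q qinv i l j k) (fun l j k => @VE2 _ _ q qinv i l j k)). Qed.
Lemma T2Fg (R : comPzRingType) n (q qinv : R) i l (ab cd : 'I_n * 'I_n) : (2 < l)%N -> actF (tensmod q qinv (Vstar n q qinv) (Vmod n q qinv)) i l ab cd = 0.
Proof. exact: (@tensFge3 _ _ q qinv _ _ (fun h j => qpow q qinv (- h j)) i l ab cd (VsH q qinv) (fun l j k => @VsF2 _ _ q qinv i l j k) (fun l j k => @VF2 _ _ q qinv i l j k)). Qed.

Lemma T3E1 (R : comPzRingType) n (q qinv : R) i (ab cd : 'I_n * 'I_n) :
  actE (tensmod q qinv (Vmod n q qinv) (Vstar n q qinv)) i 1 ab cd =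
    (ab.1 == cd.1)%:R * ((fun h j => qpow q qinv (- h j)) (Kw i 0) ab.2 * actE (Vstar n q qinv) i 1 ab.2 cd.2)
    + actE (Vmod n q qinv) i 1 ab.1 cd.1 * ((fun h j => qpow q qinv (- h j)) (Kw i (-1)) ab.2 * (ab.2 == cd.2)%:R).
Proof. exact: (@tensE1 _ _ q qinv _ _ (fun h j => qpow q qinv (- h j)) i ab cd (VsH q qinv) (VE0 q qinv i) (VsE0 q qinv i)). Qed.
Lemma T3E2 (R : comPzRingType) n (q qinv : R) i (ab cd : 'I_n * 'I_n) :
  actE (tensmod q qinv (Vmod n q qinv) (Vstar n q qinv)) i 2 ab cd =
    q * (actE (Vmod n q qinv) i 1 ab.1 cd.1 * ((fun h j => qpow q qinv (- h j)) (Kw i (-1)) ab.2 * actE (Vstar n q qinv) i 1 ab.2 cd.2)).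
Proof. exact: (@tensE2 _ _ q qinv _ _ (fun h j => qpow q qinv (- h j)) i ab cd (VsH q qinv) (fun j k => @VE2 _ _ q qinv i 2 j k isT) (fun j k => @VsE2 _ _ q qinv i 2 j k isT)). Qed.
Lemma T3F1 (R : comPzRingType) n (q qinv : R) i (ab cd : 'I_n * 'I_n) :
  actF (tensmod q qinv (Vmod n q qinv) (Vstar n q qinv)) i 1 ab cd =
    (fun h j => qpow q qinv (h j)) (Kw i 1) ab.1 * (ab.1 == cd.1)%:R * actF (Vstar n q qinv) i 1 ab.2 cd.2
    + (fun h j => qpow q qinv (h j)) (Kw i 0) ab.1 * actF (Vmod n q qinv) i 1 ab.1 cd.1 * (ab.2 == cd.2)%:R.
Proof. exact: (@tensF1 _ _ q qinv _ _ (fun h j => qpow q qinv (h j)) i ab cd (VH q qinv) (VF0 q qinv i) (VsF0 q qinv i)). Qed.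
Lemma T3F2 (R : comPzRingType) n (q qinv : R) i (ab cd : 'I_n * 'I_n) :
  actF (tensmod q qinv (Vmod n q qinv) (Vstar n q qinv)) i 2 ab cd =
    q * ((fun h j => qpow q qinv (h j)) (Kw i 1) ab.1 * actF (Vmod n q qinv) i 1 ab.1 cd.1 * actF (Vstar n q qinv) i 1 ab.2 cd.2).
Proof. exact: (@tensF2 _ _ q qinv _ _ (fun h j => qpow q qinv (h j)) i ab cd (VH q qinv) (fun j k => @VF2 _ _ q qinv i 2 j k isT) (fun j k => @VsF2 _ _ q qinv i 2 j k isT)). Qed.
Lemma T3E0 (R : comPzRingType) n (q qinv : R) i (ab cd : 'I_n * 'I_n) : actE (tensmod q qinv (Vmod n q qinv) (Vstar n q qinv)) i 0 ab cd = (ab == cd)%:R.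
Proof. exact: (@tensE0 _ _ q qinv _ _ (fun h j => qpow q qinv (- h j)) i ab cd (VsH q qinv) (fun j => ltac:(by rewrite /= K0 ?oppr0)) (VE0 q qinv i) (VsE0 q qinv i)). Qed.
Lemma T3F0 (R : comPzRingType) n (q qinv : R) i (ab cd : 'I_n * 'I_n) : actF (tensmod q qinv (Vmod n q qinv) (Vstar n q qinv)) i 0 ab cd = (ab == cd)%:R.
Proof. exact: (@tensF0 _ _ q qinv _ _ (fun h j => qpow q qinv (h j)) i ab cd (VH q qinv) (fun j => ltac:(by rewrite /= K0 ?oppr0)) (VF0 q qinv i) (VsF0 q qinv i)). Qed.
Lemma T3Eg (R : comPzRingType) n (q qinv : R) i l (ab cd : 'I_n * 'I_n) : (2 < l)%N -> actE (tensmod q qinv (Vmod n q qinv) (Vstar n q qinv)) i l ab cd = 0.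
Proof. exact: (@tensEge3 _ _ q qinv _ _ (fun h j => qpow q qinv (- h j)) i l ab cd (VsH q qinv) (fun l j k => @VE2 _ _ q qinv i l j k) (fun l j k => @VsE2 _ _ q qinv i l j k)). Qed.
Lemma T3Fg (R : comPzRingType) n (q qinv : R) i l (ab cd : 'I_n * 'I_n) : (2 < l)%N -> actF (tensmod q qinv (Vmod n q qinv) (Vstar n q qinv)) i l ab cd = 0.
Proof. exact: (@tensFge3 _ _ q qinv _ _ (fun h j => qpow q qinv (h j)) i l ab cd (VH q qinv) (fun l j k => @VF2 _ _ q qinv i l j k) (fun l j k => @VsF2 _ _ q qinv i l j k)). Qed.

Arguments psi : simpl never.
Arguments psi' : simpl never.
Arguments Vmod : simpl never.
Arguments Vstar : simpl never.
Arguments V' : simpl never.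
Arguments tensmod : simpl never.

Ltac crush1 Hq :=
  rewrite ?VE1 ?VsE1 ?VpE1 ?VF1 ?VsF1 ?VpF1 /= ?KwE ?K0 ?xpair_eqE ?ordE /=;
  crush Hq.
Ltac crush2 Hq :=
  rewrite /psi' /psi ?ordE /=; crush Hq.



Lemma psiE1 (R : comPzRingType) n (q qinv : R) i (hi : (i.+1 < n)%N) (Hq : q * qinv = 1) :
  lcomp (psi q qinv) (actE (tensmod q qinv (Vstar n q qinv) (Vmod n q qinv)) i 1)
  = lcomp (actE (tensmod q qinv (Vmod n q qinv) (Vstar n q qinv)) i 1) (psi q qinv).
Proof.
pose oi := Ordinal (ltnW hi); pose oi1 := Ordinal hi.
apply: functional_extensionality => -[a b]; apply: functional_extensionality => -[i0 k].
rewrite /lcomp (@sum2 _ _ _ (i0, oi) (oi1, k)); last first.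
  move=> [c d] h1 h2; rewrite T2E1 ?VE1 ?VsE1 ?VpE1 ?VF1 ?VsF1 ?VpF1; move: h1 h2; rewrite !xpair_eqE !ordE /= => h1 h2. crush1 Hq.
rewrite (@sum2 _ _ _ (a, oi) (oi1, b)); last first.
  move=> [c d] h1 h2; rewrite T3E1 ?VE1 ?VsE1 ?VpE1 ?VF1 ?VsF1 ?VpF1; move: h1 h2; rewrite !xpair_eqE !ordE /= => h1 h2. crush1 Hq.
rewrite !T2E1 !T3E1 ?VE1 ?VsE1 ?VpE1 ?VF1 ?VsF1 ?VpF1. crush1 Hq. all: crush2 Hq.
Qed.

Lemma psiE2 (R : comPzRingType) n (q qinv : R) i (hi : (i.+1 < n)%N) (Hq : q * qinv = 1) :
  lcomp (psi q qinv) (actE (tensmod q qinv (Vstar n q qinv) (Vmod n q qinv)) i 2)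
  = lcomp (actE (tensmod q qinv (Vmod n q qinv) (Vstar n q qinv)) i 2) (psi q qinv).
Proof.
pose oi := Ordinal (ltnW hi); pose oi1 := Ordinal hi.
apply: functional_extensionality => -[a b]; apply: functional_extensionality => -[i0 k].
rewrite /lcomp (@sum2 _ _ _ (oi1, oi) (oi1, oi)); last first.
  move=> [c d] h1 h2; rewrite T2E2 ?VE1 ?VsE1 ?VpE1 ?VF1 ?VsF1 ?VpF1; move: h1 h2; rewrite !xpair_eqE !ordE /= => h1 h2. crush1 Hq.
rewrite (@sum2 _ _ _ (oi1, oi) (oi1, oi)); last first.
  move=> [c d] h1 h2; rewrite T3E2 ?VE1 ?VsE1 ?VpE1 ?VF1 ?VsF1 ?VpF1; move: h1 h2; rewrite !xpair_eqE !ordE /= => h1 h2. crush1 Hq.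
rewrite !T2E2 !T3E2 ?VE1 ?VsE1 ?VpE1 ?VF1 ?VsF1 ?VpF1. crush1 Hq. all: crush2 Hq.
Qed.

Lemma psiF1 (R : comPzRingType) n (q qinv : R) i (hi : (i.+1 < n)%N) (Hq : q * qinv = 1) :
  lcomp (psi q qinv) (actF (tensmod q qinv (Vstar n q qinv) (Vmod n q qinv)) i 1)
  = lcomp (actF (tensmod q qinv (Vmod n q qinv) (Vstar n q qinv)) i 1) (psi q qinv).
Proof.
pose oi := Ordinal (ltnW hi); pose oi1 := Ordinal hi.
apply: functional_extensionality => -[a b]; apply: functional_extensionality => -[i0 k].
rewrite /lcomp (@sum2 _ _ _ (i0, oi1) (oi, k)); last first.
  move=> [c d] h1 h2; rewrite T2F1 ?VE1 ?VsE1 ?VpE1 ?VF1 ?VsF1 ?VpF1; move: h1 h2; rewrite !xpair_eqE !ordE /= => h1 h2. crush1 Hq.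
rewrite (@sum2 _ _ _ (a, oi1) (oi, b)); last first.
  move=> [c d] h1 h2; rewrite T3F1 ?VE1 ?VsE1 ?VpE1 ?VF1 ?VsF1 ?VpF1; move: h1 h2; rewrite !xpair_eqE !ordE /= => h1 h2. crush1 Hq.
rewrite !T2F1 !T3F1 ?VE1 ?VsE1 ?VpE1 ?VF1 ?VsF1 ?VpF1. crush1 Hq. all: crush2 Hq.
Qed.

Lemma psiF2 (R : comPzRingType) n (q qinv : R) i (hi : (i.+1 < n)%N) (Hq : q * qinv = 1) :
  lcomp (psi q qinv) (actF (tensmod q qinv (Vstar n q qinv) (Vmod n q qinv)) i 2)
  = lcomp (actF (tensmod q qinv (Vmod n q qinv) (Vstar n q qinv)) i 2) (psi q qinv).
Proof.
pose oi := Ordinal (ltnW hi); pose oi1 := Ordinal hi.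
apply: functional_extensionality => -[a b]; apply: functional_extensionality => -[i0 k].
rewrite /lcomp (@sum2 _ _ _ (oi, oi1) (oi, oi1)); last first.
  move=> [c d] h1 h2; rewrite T2F2 ?VE1 ?VsE1 ?VpE1 ?VF1 ?VsF1 ?VpF1; move: h1 h2; rewrite !xpair_eqE !ordE /= => h1 h2. crush1 Hq.
rewrite (@sum2 _ _ _ (oi, oi1) (oi, oi1)); last first.
  move=> [c d] h1 h2; rewrite T3F2 ?VE1 ?VsE1 ?VpE1 ?VF1 ?VsF1 ?VpF1; move: h1 h2; rewrite !xpair_eqE !ordE /= => h1 h2. crush1 Hq.
rewrite !T2F2 !T3F2 ?VE1 ?VsE1 ?VpE1 ?VF1 ?VsF1 ?VpF1. crush1 Hq. all: crush2 Hq.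
Qed.


Lemma qpowNK (R : comPzRingType) (q qinv : R) (Hq : q * qinv = 1) z :
  qpow q qinv (- z) * qpow q qinv z = 1.
Proof.
case: z => [[|m]|m] /=; first by rewrite mulr1.
  by rewrite /qpow /= -exprMn mulrC Hq expr1n.
by rewrite /qpow /= -exprMn Hq expr1n.
Qed.

Lemma qpowS (R : comPzRingType) (q qinv : R) (Hq : q * qinv = 1) z :
  qpow q qinv (z + 1) = qpow q qinv z * q.
Proof.
case: z => [m|[|m]].
- by rewrite /qpow /= addn1 exprSr.
- by rewrite /qpow /= expr1 mulrC Hq.
- have -> : (Negz m.+1 + 1 = Negz m)%R by rewrite !NegzE; lia.
  by rewrite /qpow /= [in RHS]exprSr -mulrA [qinv * q]mulrC Hq mulr1.
Qed.

Lemma qpowc (R : comPzRingType) (q qinv : R) (Hq : q * qinv = 1) (n i : nat) :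
  qpow q qinv (n%:Z - 1 - 2 * (i.+1)%:Z) = qpow q qinv (n%:Z - 1 - 2 * i%:Z) * qinv * qinv.
Proof.
have -> : (n%:Z - 1 - 2 * i%:Z = (n%:Z - 1 - 2 * (i.+1)%:Z) + 1 + 1)%R.
  by lia.
rewrite !qpowS //; ring: Hq.
Qed.

Lemma TH (R : comPzRingType) n (q qinv : R) (I J : finType) (M : Umod R n I) (N : Umod R n J) h ab cd :
  actH (tensmod q qinv M N) h ab cd = actH M h ab.1 cd.1 * actH N h ab.2 cd.2.
Proof. by []. Qed.

Lemma psiH (R : comPzRingType) n (q qinv : R) (Hq : q * qinv = 1) h :
  lcomp (psi q qinv) (actH (tensmod q qinv (Vstar n q qinv) (Vmod n q qinv)) h)
  = lcomp (actH (tensmod q qinv (Vmod n q qinv) (Vstar n q qinv)) h) (psi q qinv).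
Proof.
apply: functional_extensionality => -[a b]; apply: functional_extensionality => -[i0 k].
have e1 := qpowNK Hq (h a); have e2 := qpowNK Hq (h b);
have e3 := qpowNK Hq (h i0); have e4 := qpowNK Hq (h k).
rewrite /lcomp (@sum2 _ _ _ (i0, k) (i0, k)); last first.
  move=> [c d] h1 _; rewrite !TH !VsH !VH; move: h1; rewrite !xpair_eqE !ordE /= => h1.
  crush Hq.
rewrite (@sum2 _ _ _ (a, b) (a, b)); last first.
  move=> [c d] h1 _; rewrite !TH !VsH !VH; move: h1; rewrite !xpair_eqE !ordE /= => h1.
  crush Hq.
rewrite !eqxx !TH !VsH !VH !eqxx /psi ?ordE /=.
crush Hq.
all: repeat match goal with H : is_true (@eq_op _ (@nat_of_ord _ ?u) (@nat_of_ord _ ?v)) |- _ =>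
  move/eqP/val_inj: H => H; first [subst u | subst v] end.
all: ring: Hq e1 e2 e3 e4.
Qed.

Definition Dm (R : comPzRingType) n (q qinv : R) : lmap R ('I_n * 'I_n)%type ('I_n * 'I_n)%type :=
  fun x y => (x == y)%:R * qpow q qinv (n%:Z - 1 - 2 * (nat_of_ord y.1)%:Z).

Lemma DlcompL (R : comPzRingType) n (q qinv : R) (I : finType) (A : lmap R I ('I_n * 'I_n)%type) x y :
  lcomp (@Dm _ n q qinv) A x y = qpow q qinv (n%:Z - 1 - 2 * (nat_of_ord x.1)%:Z) * A x y.
Proof.
rewrite /lcomp /Dm -(sum_diag' (fun m => qpow q qinv (n%:Z - 1 - 2 * (nat_of_ord m.1)%:Z) * A m y) x).
by apply: eq_bigr => m _; rewrite mulrA.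
Qed.

Lemma DlcompR (R : comPzRingType) n (q qinv : R) (I : finType) (A : lmap R ('I_n * 'I_n)%type I) x y :
  lcomp A (@Dm _ n q qinv) x y = A x y * qpow q qinv (n%:Z - 1 - 2 * (nat_of_ord y.1)%:Z).
Proof.
rewrite /lcomp /Dm -(sum_diag (fun m => A x m * qpow q qinv (n%:Z - 1 - 2 * (nat_of_ord y.1)%:Z)) y).
by apply: eq_bigr => m _; case: eqP => [->|]; rewrite ?mul1r ?mul0r ?mulr0.
Qed.

Lemma psi'_eq (R : comPzRingType) n (q qinv : R) :
  psi' q qinv = lcomp (psi q qinv) (@Dm _ n q qinv).
Proof.
apply: functional_extensionality => x; apply: functional_extensionality => y.
by rewrite DlcompR /psi' mulrC.
Qed.

Ltac leafsub := repeat match goal with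
 | H : is_true (@eq_op _ (@nat_of_ord _ ?u) (@nat_of_ord _ ?v)) |- _ =>
     move/eqP/val_inj: H => H; first [subst u | subst v]
 | H : is_true (@eq_op _ (@nat_of_ord _ ?u) _) |- _ => move/eqP: H => H; rewrite ?H; clear H
 end.

Ltac crushD Hq := crush1 Hq; leafsub; rewrite ?(qpowc Hq); ring: Hq.

Lemma DH (R : comPzRingType) n (q qinv : R) (Hq : q * qinv = 1) h :
  lcomp (@Dm _ n q qinv) (actH (tensmod q qinv (V' n q qinv) (Vmod n q qinv)) h)
  = lcomp (actH (tensmod q qinv (Vstar n q qinv) (Vmod n q qinv)) h) (@Dm _ n q qinv).
Proof.
apply: functional_extensionality => -[a b]; apply: functional_extensionality => -[i0 k].
rewrite DlcompL DlcompR !TH ?VsH ?VpH ?VH /=.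
crush1 Hq; leafsub; ring.
Qed.

Lemma DE1 (R : comPzRingType) n (q qinv : R) (Hq : q * qinv = 1) i :
  lcomp (@Dm _ n q qinv) (actE (tensmod q qinv (V' n q qinv) (Vmod n q qinv)) i 1)
  = lcomp (actE (tensmod q qinv (Vstar n q qinv) (Vmod n q qinv)) i 1) (@Dm _ n q qinv).
Proof.
apply: functional_extensionality => -[a b]; apply: functional_extensionality => -[i0 k].
rewrite DlcompL DlcompR T1E1 T2E1 ?VE1 ?VsE1 ?VpE1 /=.
crushD Hq.
Qed.
Lemma DE2 (R : comPzRingType) n (q qinv : R) (Hq : q * qinv = 1) i :
  lcomp (@Dm _ n q qinv) (actE (tensmod q qinv (V' n q qinv) (Vmod n q qinv)) i 2)
  = lcomp (actE (tensmod q qinv (Vstar n q qinv) (Vmod n q qinv)) i 2) (@Dm _ n q qinv).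
Proof.
apply: functional_extensionality => -[a b]; apply: functional_extensionality => -[i0 k].
rewrite DlcompL DlcompR T1E2 T2E2 ?VE1 ?VsE1 ?VpE1 /=.
crushD Hq.
Qed.
Lemma DF1 (R : comPzRingType) n (q qinv : R) (Hq : q * qinv = 1) i :
  lcomp (@Dm _ n q qinv) (actF (tensmod q qinv (V' n q qinv) (Vmod n q qinv)) i 1)
  = lcomp (actF (tensmod q qinv (Vstar n q qinv) (Vmod n q qinv)) i 1) (@Dm _ n q qinv).
Proof.
apply: functional_extensionality => -[a b]; apply: functional_extensionality => -[i0 k].
rewrite DlcompL DlcompR T1F1 T2F1 ?VF1 ?VsF1 ?VpF1 /=.
crushD Hq.
Qed.
Lemma DF2 (R : comPzRingType) n (q qinv : R) (Hq : q * qinv = 1) i :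
  lcomp (@Dm _ n q qinv) (actF (tensmod q qinv (V' n q qinv) (Vmod n q qinv)) i 2)
  = lcomp (actF (tensmod q qinv (Vstar n q qinv) (Vmod n q qinv)) i 2) (@Dm _ n q qinv).
Proof.
apply: functional_extensionality => -[a b]; apply: functional_extensionality => -[i0 k].
rewrite DlcompL DlcompR T1F2 T2F2 ?VF1 ?VsF1 ?VpF1 /=.
crushD Hq.
Qed.


Lemma inj_surj_bij (A B : Type) (f : A -> B) :
  injective f -> (forall b, exists a, f a = b) -> bijective f.
Proof.
move=> fi fs.
pose g b := proj1_sig (constructive_indefinite_description _ (fs b)).
have gK : cancel g f by move=> b; rewrite /g; case: constructive_indefinite_description.
exists g => // a; apply: fi; exact: gK.
Qed.

Lemma lapply_lcomp (R : comPzRingType) (I J K : finType) (A : lmap R J K) (B : lmap R I J) v :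
  lapply (lcomp A B) v = lapply A (lapply B v).
Proof.
apply/ffunP => k; rewrite !ffunE /lcomp.
under eq_bigr => i _ do rewrite big_distrl /=.
rewrite exchange_big /=; apply: eq_bigr => j _; rewrite ffunE big_distrr /=.
by apply: eq_bigr => i _; rewrite mulrA.
Qed.

Lemma psi_off (R : comPzRingType) n (q qinv : R) (v : {ffun 'I_n * 'I_n -> R}) (i0 k : 'I_n) :
  k != i0 -> lapply (psi q qinv) v (k, i0) = v (i0, k).
Proof.
rewrite ordE => hne; rewrite ffunE (@sum2 _ _ _ (i0, k) (i0, k)); last first.
  move=> [c d] h1 _; move: h1; rewrite !xpair_eqE !ordE /= => h1.
  rewrite /psi ?ordE /=; crush (erefl q).
rewrite eqxx /psi ?ordE /=; crush (erefl q).
Qed.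

Lemma psi_diag (R : comPzRingType) n (q qinv : R) (v : {ffun 'I_n * 'I_n -> R}) (a : 'I_n) :
  lapply (psi q qinv) v (a, a) =
  qinv * v (a, a) + (qinv - q) * \sum_(c : 'I_n) ((a < c)%N)%:R * v (c, c).
Proof.
rewrite ffunE.
have -> : \sum_(p : 'I_n * 'I_n) psi q qinv (a,a) p * v p =
   \sum_(i0 : 'I_n) \sum_(k : 'I_n) psi q qinv (a,a) (i0,k) * v (i0,k).
  by rewrite pair_bigA; apply: eq_bigr => -[].
have inner : forall i0 : 'I_n, \sum_(k : 'I_n) psi q qinv (a,a) (i0,k) * v (i0,k)
   = (qinv * (i0 == a)%:R + (qinv - q) * ((a < i0)%N)%:R) * v (i0, i0).
  move=> i0; rewrite (@sum2 _ _ _ i0 i0); last first.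
    move=> k h1 _; move: h1; rewrite !ordE /= => h1.
    rewrite /psi ?ordE /=; crush (erefl q).
  rewrite eqxx /psi ?ordE /=; crush (erefl q).
under eq_bigr => i0 _ do rewrite inner mulrDl.
rewrite big_split /=; congr (_ + _).
  rewrite -(sum_diag (fun c => qinv * v (c, c)) a); apply: eq_bigr => c _; ring.
by rewrite mulr_sumr; apply: eq_bigr => c _; ring.
Qed.

Lemma psi_inj (R : comPzRingType) n (q qinv : R) (Hq : q * qinv = 1) :
  injective (lapply (@psi R n q qinv)).
Proof.
move=> v1 v2 e; apply/ffunP => -[i0 k].
case: (eqVneq k i0) => [->|hne]; last first.
  by have := congr1 (fun w : {ffun 'I_n * 'I_n -> R} => w (k, i0)) e; rewrite /= !psi_off.
have key : forall m (a : 'I_n), (n - a <= m)%N -> v1 (a, a) = v2 (a, a).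
  elim=> [|m IH] a ha; first by have := ltn_ord a; lia.
  have := congr1 (fun w : {ffun 'I_n * 'I_n -> R} => w (a, a)) e; rewrite /= !psi_diag.
  have -> : \sum_(c : 'I_n) ((a < c)%N)%:R * v1 (c, c) = \sum_(c : 'I_n) ((a < c)%N)%:R * v2 (c, c).
    apply: eq_bigr => c _; case: (ltnP a c) => h; last by rewrite !mul0r.
    by rewrite IH //; lia.
  move/addIr => h; have := congr1 (fun x => q * x) h.
  by rewrite !mulrA Hq !mul1r.
by apply: (key (n - i0)%N).
Qed.

Definition delta (R : comPzRingType) (I : finType) (x : I) : {ffun I -> R} := [ffun y => (y == x)%:R].
Definition sc (R : comPzRingType) (I : finType) (c : R) (w : {ffun I -> R}) : {ffun I -> R} :=
  [ffun y => c * w y].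

Lemma lapplyD (R : comPzRingType) (I J : finType) (A : lmap R I J) v1 v2 :
  lapply A (v1 + v2) = lapply A v1 + lapply A v2.
Proof.
apply/ffunP => j; rewrite !ffunE -big_split /=; apply: eq_bigr => i _; by rewrite ffunE mulrDr.
Qed.
Lemma lapplyZ (R : comPzRingType) (I J : finType) (A : lmap R I J) (c : R) v :
  lapply A (sc c v) = sc c (lapply A v).
Proof.
apply/ffunP => j; rewrite !ffunE mulr_sumr; apply: eq_bigr => i _; rewrite ffunE; ring.
Qed.
Lemma lapply0 (R : comPzRingType) (I J : finType) (A : lmap R I J) :
  lapply A 0 = 0.
Proof. by apply/ffunP => j; rewrite !ffunE big1 // => i _; rewrite ffunE mulr0. Qed.

Definition inim (R : comPzRingType) (I J : finType) (A : lmap R I J) (w : {ffun J -> R}) :=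
  exists v, lapply A v = w.

Lemma inim0 (R : comPzRingType) (I J : finType) (A : lmap R I J) : inim A 0.
Proof. by exists 0; rewrite lapply0. Qed.
Lemma inimD (R : comPzRingType) (I J : finType) (A : lmap R I J) w1 w2 :
  inim A w1 -> inim A w2 -> inim A (w1 + w2).
Proof. by move=> [v1 <-] [v2 <-]; exists (v1 + v2); rewrite lapplyD. Qed.
Lemma inimZ (R : comPzRingType) (I J : finType) (A : lmap R I J) (c : R) w :
  inim A w -> inim A (sc c w).
Proof. by move=> [v <-]; exists (sc c v); rewrite lapplyZ. Qed.
Lemma inim_sum (R : comPzRingType) (I J K : finType) (A : lmap R I J) (F : K -> {ffun J -> R}) :
  (forall k, inim A (F k)) -> inim A (\sum_k F k).
Proof.
move=> hF; apply: (big_ind (inim A)) => //; [exact: inim0 | exact: inimD].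
Qed.

Lemma decomp (R : comPzRingType) (I : finType) (w : {ffun I -> R}) :
  w = \sum_x sc (w x) (delta R x).
Proof.
apply/ffunP => y; rewrite sum_ffunE -(sum_diag' (fun x => w x) y).
apply: eq_bigr => x _; rewrite !ffunE eq_sym; ring.
Qed.

Lemma psi_delta_off (R : comPzRingType) n (q qinv : R) (a b : 'I_n) :
  a != b -> lapply (psi q qinv) (delta R (b, a)) = delta R (a, b).
Proof.
rewrite ordE => hne; apply/ffunP => -[c d]; rewrite !ffunE.
rewrite (@sum2 _ _ _ (b, a) (b, a)); last first.
  by move=> z /negbTE hz _; rewrite ffunE hz mulr0.
rewrite eqxx ffunE eqxx /psi !xpair_eqE ?ordE /=; crush (erefl q).
Qed.

Lemma psi_delta_diag (R : comPzRingType) n (q qinv : R) (a : 'I_n) :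
  lapply (psi q qinv) (delta R (a, a)) =
  sc qinv (delta R (a, a)) + sc (qinv - q) (\sum_(c : 'I_n) sc ((c < a)%N)%:R (delta R (c, c))).
Proof.
apply/ffunP => -[c d]; rewrite !ffunE sum_ffunE.
rewrite (@sum2 _ _ _ (a, a) (a, a)); last first.
  by move=> z /negbTE hz _; rewrite ffunE hz mulr0.
rewrite (@sum2 _ _ _ c c); last first.
  move=> z hz _; rewrite !ffunE; move: hz; rewrite !xpair_eqE !ordE /= => hz. crush (erefl q).
rewrite eqxx !ffunE eqxx /psi !xpair_eqE ?ordE /=; crush (erefl q).
Qed.

Lemma diag_decomp (R : comPzRingType) n (q qinv : R) (Hq : q * qinv = 1) (a : 'I_n) :
  delta R (a, a) = lapply (psi q qinv) (sc q (delta R (a, a)))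
         + sc (- (q * (qinv - q))) (\sum_(c : 'I_n) sc ((c < a)%N)%:R (delta R (c, c))).
Proof.
rewrite lapplyZ psi_delta_diag; apply/ffunP => y; rewrite !ffunE !sum_ffunE ?ffunE.
under [in RHS]eq_bigr => c _ do rewrite !ffunE. ring: Hq.
Qed.

Lemma diag_inim (R : comPzRingType) n (q qinv : R) (Hq : q * qinv = 1) :
  forall m (a : 'I_n), (nat_of_ord a <= m)%N -> inim (psi q qinv) (delta R (a, a)).
Proof.
  elim=> [|m IH] a0 ha; rewrite (diag_decomp Hq); apply: inimD;
    try by exists (sc q (delta R (a0, a0))).
  all: apply: inimZ; apply: inim_sum => c.
  all: case: (ltnP c a0) => hc; last first.
  all: try (have -> : sc (false%:R : R) (delta R (c, c)) = 0
             by apply/ffunP => y; rewrite !ffunE mul0r);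
       try exact: inim0.
  - exfalso; lia.
  - apply: inimZ; apply: IH; lia.
Qed.

Lemma psi_surj (R : comPzRingType) n (q qinv : R) (Hq : q * qinv = 1) w :
  exists v, lapply (@psi R n q qinv) v = w.
Proof.
rewrite (decomp w); apply: inim_sum => x; apply: inimZ.
case: x => a b; case: (eqVneq a b) => [<-|hne]; last first.
  by exists (delta R (b, a)); rewrite psi_delta_off.
by apply: (diag_inim Hq (leqnn a)).
Qed.

Lemma psi_bij (R : comPzRingType) n (q qinv : R) (Hq : q * qinv = 1) :
  bijective (lapply (@psi R n q qinv)).
Proof. apply: inj_surj_bij; [exact: psi_inj | exact: psi_surj]. Qed.


Lemma lcompA (R : comPzRingType) (I J K L : finType) (A : lmap R K L) (B : lmap R J K) (C : lmap R I J) :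
  lcomp (lcomp A B) C = lcomp A (lcomp B C).
Proof.
apply: functional_extensionality => l; apply: functional_extensionality => i.
rewrite /lcomp; under eq_bigr => j _ do rewrite big_distrl /=.
rewrite exchange_big /=; apply: eq_bigr => k _; rewrite big_distrr /=.
by apply: eq_bigr => j _; rewrite mulrA.
Qed.

Lemma hom_comp (R : comPzRingType) n (I J K : finType) (M : Umod R n I) (N : Umod R n J) (L : Umod R n K)
  (A : lmap R I J) (B : lmap R J K) :
  is_Uhom M N A -> is_Uhom N L B -> is_Uhom M L (lcomp B A).
Proof.
move=> [h1 e1 f1] [h2 e2 f2]; split.
- by move=> h; rewrite lcompA h1 -lcompA h2 lcompA.
- by move=> i l hi; rewrite lcompA e1 // -lcompA e2 // lcompA.
- by move=> i l hi; rewrite lcompA f1 // -lcompA f2 // lcompA.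
Qed.

Lemma lcomp_idr (R : comPzRingType) (I J : finType) (P : lmap R I J) (A : lmap R I I) :
  (forall x y, A x y = (x == y)%:R) -> lcomp P A = P.
Proof.
move=> hA; apply: functional_extensionality => x; apply: functional_extensionality => y.
rewrite /lcomp -[RHS](sum_diag (fun z => P x z) y); apply: eq_bigr => z _; rewrite hA mulrC.
done.
Qed.
Lemma lcomp_idl (R : comPzRingType) (I J : finType) (P : lmap R I J) (A : lmap R J J) :
  (forall x y, A x y = (x == y)%:R) -> lcomp A P = P.
Proof.
move=> hA; apply: functional_extensionality => x; apply: functional_extensionality => y.
by rewrite /lcomp -[RHS](sum_diag' (fun z => P z y) x); apply: eq_bigr => z _; rewrite hA.
Qed.
Lemma lcomp_0r (R : comPzRingType) (I J K : finType) (P : lmap R J K) (A : lmap R I J) :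
  (forall x y, A x y = 0) -> lcomp P A = fun _ _ => 0.
Proof.
move=> hA; apply: functional_extensionality => x; apply: functional_extensionality => y.
by rewrite /lcomp big1 // => z _; rewrite hA mulr0.
Qed.
Lemma lcomp_0l (R : comPzRingType) (I J K : finType) (P : lmap R I J) (A : lmap R J K) :
  (forall x y, A x y = 0) -> lcomp A P = fun _ _ => 0.
Proof.
move=> hA; apply: functional_extensionality => x; apply: functional_extensionality => y.
by rewrite /lcomp big1 // => z _; rewrite hA mul0r.
Qed.

Lemma hom_pieces (R : comPzRingType) n (I J : finType) (M : Umod R n I) (N : Umod R n J) (P : lmap R I J) :
  (forall h, lcomp P (actH M h) = lcomp (actH N h) P) ->
  (forall i, (i.+1 < n)%N -> lcomp P (actE M i 1) = lcomp (actE N i 1) P) ->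
  (forall i, (i.+1 < n)%N -> lcomp P (actE M i 2) = lcomp (actE N i 2) P) ->
  (forall i, (i.+1 < n)%N -> lcomp P (actF M i 1) = lcomp (actF N i 1) P) ->
  (forall i, (i.+1 < n)%N -> lcomp P (actF M i 2) = lcomp (actF N i 2) P) ->
  (forall i x y, actE M i 0 x y = (x == y)%:R) -> (forall i x y, actE N i 0 x y = (x == y)%:R) ->
  (forall i x y, actF M i 0 x y = (x == y)%:R) -> (forall i x y, actF N i 0 x y = (x == y)%:R) ->
  (forall i l x y, (2 < l)%N -> actE M i l x y = 0) -> (forall i l x y, (2 < l)%N -> actE N i l x y = 0) ->
  (forall i l x y, (2 < l)%N -> actF M i l x y = 0) -> (forall i l x y, (2 < l)%N -> actF N i l x y = 0) ->
  is_Uhom M N P.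
Proof.
move=> hH e1 e2 f1 f2 eM0 eN0 fM0 fN0 eMg eNg fMg fNg; split => //.
- move=> i [|[|[|l]]] hi; try by [apply: e1 | apply: e2].
    by rewrite lcomp_idr // lcomp_idl.
  by rewrite lcomp_0r ?lcomp_0l // => x y; [apply: eNg | apply: eMg].
- move=> i [|[|[|l]]] hi; try by [apply: f1 | apply: f2].
    by rewrite lcomp_idr // lcomp_idl.
  by rewrite lcomp_0r ?lcomp_0l // => x y; [apply: fNg | apply: fMg].
Qed.

Lemma D_bij (R : comPzRingType) n (q qinv : R) (Hq : q * qinv = 1) :
  bijective (lapply (@Dm R n q qinv)).
Proof.
pose c (x : 'I_n * 'I_n) := (n%:Z - 1 - 2 * (nat_of_ord x.1)%:Z)%R.
have hD : forall v, lapply (@Dm R n q qinv) v = [ffun x => qpow q qinv (c x) * v x].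
  move=> v; apply/ffunP => x; rewrite !ffunE /Dm -(sum_diag' (fun z => qpow q qinv (c z) * v z) x).
  by apply: eq_bigr => z _; rewrite /c mulrA.
exists (fun v : {ffun 'I_n * 'I_n -> R} => [ffun x => qpow q qinv (- c x) * v x]).
- by move=> v; apply/ffunP => x; rewrite hD !ffunE mulrA qpowNK // mul1r.
- by move=> v; apply/ffunP => x; rewrite hD !ffunE mulrA [_ * qpow _ _ (- _)]mulrC qpowNK // mul1r.
Qed.

Unset Implicit Arguments.

Theorem lemma5p1 (R : comPzRingType) (n : nat) (q qinv : R) :
  (1 <= n)%N -> q * qinv = 1 ->
  is_Uiso (tensmod q qinv (V' n q qinv) (Vmod n q qinv))
          (tensmod q qinv (Vmod n q qinv) (Vstar n q qinv)) (psi' q qinv)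
  /\
  is_Uiso (tensmod q qinv (Vstar n q qinv) (Vmod n q qinv))
          (tensmod q qinv (Vmod n q qinv) (Vstar n q qinv)) (psi q qinv).
Proof.
move=> hn Hq.
have psihom : is_Uhom (tensmod q qinv (Vstar n q qinv) (Vmod n q qinv))
          (tensmod q qinv (Vmod n q qinv) (Vstar n q qinv)) (psi q qinv).
  apply: hom_pieces.
  - by move=> h; apply: psiH.
  - by move=> i hi; apply: psiE1.
  - by move=> i hi; apply: psiE2.
  - by move=> i hi; apply: psiF1.
  - by move=> i hi; apply: psiF2.
  - by move=> i x y; apply: T2E0.
  - by move=> i x y; apply: T3E0.
  - by move=> i x y; apply: T2F0.
  - by move=> i x y; apply: T3F0.
  - by move=> i l x y hl; apply: T2Eg.
  - by move=> i l x y hl; apply: T3Eg.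
  - by move=> i l x y hl; apply: T2Fg.
  - by move=> i l x y hl; apply: T3Fg.
have Dhom : is_Uhom (tensmod q qinv (V' n q qinv) (Vmod n q qinv))
          (tensmod q qinv (Vstar n q qinv) (Vmod n q qinv)) (@Dm R n q qinv).
  apply: hom_pieces.
  - by move=> h; apply: DH.
  - by move=> i hi; apply: DE1.
  - by move=> i hi; apply: DE2.
  - by move=> i hi; apply: DF1.
  - by move=> i hi; apply: DF2.
  - by move=> i x y; apply: T1E0.
  - by move=> i x y; apply: T2E0.
  - by move=> i x y; apply: T1F0.
  - by move=> i x y; apply: T2F0.
  - by move=> i l x y hl; apply: T1Eg.
  - by move=> i l x y hl; apply: T2Eg.
  - by move=> i l x y hl; apply: T1Fg.
  - by move=> i l x y hl; apply: T2Fg.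
split; split => //; last exact: psi_bij.
- by rewrite psi'_eq; apply: hom_comp Dhom psihom.
- rewrite psi'_eq.
  have -> : lapply (lcomp (psi q qinv) (@Dm R n q qinv)) = lapply (psi q qinv) \o lapply (@Dm R n q qinv).
    by apply: functional_extensionality => v; rewrite lapply_lcomp.
  apply: bij_comp; [exact: psi_bij | exact: D_bij].
Qed.
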